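(* Let $\lambda$ be a limit ordinal and $(X_\mu,T)_{\mu\le\lambda}$ minimal systems such that $(X_\lambda,T)$ is the inverse limit of $(X_\mu,T)_{\mu<\lambda}$ with respect to factor maps $\phi_{\mu,\nu}:X_\nu\to X_\mu$ ($\mu\le\nu<\lambda$). Then for every $d\in\mathbb{N}$, $(N_d(X_\lambda),\mathcal{G}_d(T))$ is the inverse limit of $(N_d(X_\mu),\mathcal{G}_d(T))_{\mu<\lambda}$ with respect to the induced maps $\phi_{\mu,\nu}^{(d)}$.
   Context: $N_d(Z)=\overline{\{(T^{p+q}z,\dots,T^{p+dq}z):z\in Z,p,q\in\mathbb{Z}\}}$; $\mathcal{G}_d(T)=\langle T\times\cdots\times T,\ T\times T^2\times\cdots\times T^d\rangle$; $\phi^{(d)}=\phi\times\cdots\times\phi$. *)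

(* Defs.v *)
From HB Require Import structures.
From mathcomp Require Import all_boot all_order all_algebra.
From mathcomp Require Import all_classical all_reals all_analysis.
Set Implicit Arguments. Unset Strict Implicit. Unset Printing Implicit Defensive.
Import Order.TTheory GRing.Theory Num.Theory.
Local Open Scope classical_set_scope.
Local Open Scope ring_scope.

Definition tpow (X : Type) (T Tinv : X -> X) (n : int) : X -> X :=
  match n with
  | Posz k => iter k T
  | Negz k => iter k.+1 Tinv
  end.

Definition tds (X : topologicalType) (T Tinv : X -> X) : Prop :=
  [/\ compact [set: X], hausdorff_space X,
      continuous T, continuous Tinv &
      cancel T Tinv /\ cancel Tinv T].

Definition minimal (X : topologicalType) (T : X -> X) : Prop :=
  forall A : set X, closed A -> A !=set0 -> T @` A = A -> A = [set: X].

Definition factor_map (Y X : topologicalType) (S : Y -> Y) (T : X -> X)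
  (f : Y -> X) : Prop :=
  [/\ continuous f, f @` [set: Y] = [set: X] & forall y, f (S y) = T (f y)].

(** (B, psi) is the inverse limit of the inverse system (A_mu, phi_{mu,nu})_{mu in I}:
    the bonding maps send A_nu onto A_mu, are the identity for mu = nu and compose;
    the maps psi_mu send B onto A_mu and are compatible with the bonding maps; and
    every compatible thread (x_mu in A_mu) has a unique lift y in B.  (For compact
    Hausdorff spaces and continuous maps this bijection onto the thread space is
    automatically a homeomorphism.) *)
Definition inverse_limit {dI : Order.disp_t} {I : porderType dI} (X : I -> Type)
  (phi : forall mu nu : I, X nu -> X mu) (A : forall mu, set (X mu))
  (Y : Type) (B : set Y) (psi : forall mu, Y -> X mu) : Prop :=
  [/\ (forall mu nu, (mu <= nu)%O -> phi mu nu @` A nu = A mu),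
      (forall mu x, A mu x -> phi mu mu x = x),
      (forall mu nu rho, (mu <= nu)%O -> (nu <= rho)%O ->
          forall x, A rho x -> phi mu nu (phi nu rho x) = phi mu rho x) &
    [/\ (forall mu, psi mu @` B = A mu),
      (forall mu nu, (mu <= nu)%O -> forall y, B y -> phi mu nu (psi nu y) = psi mu y) &
      (forall x : forall mu, X mu, (forall mu, A mu (x mu)) ->
          (forall mu nu, (mu <= nu)%O -> phi mu nu (x nu) = x mu) ->
          exists! y, B y /\ forall mu, psi mu y = x mu)]].

Definition Nd (X : topologicalType) (T Tinv : X -> X) (d : nat) : set {ptws 'I_d -> X} :=
  closure [set y : {ptws 'I_d -> X} | exists (z : X) (p q : int),
             y = (fun i : 'I_d => tpow T Tinv (p + (i.+1)%:Z * q) z)].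

Definition prodmap (Y X : Type) (d : nat) (f : Y -> X) : ('I_d -> Y) -> ('I_d -> X) :=
  fun y i => f (y i).
Arguments Nd {X} T Tinv d.
Arguments prodmap {Y X} d f.

(* Main.v *)
Require Import Defs.
From HB Require Import structures.
From mathcomp Require Import all_boot all_order all_algebra.
From mathcomp Require Import all_classical all_reals all_analysis.
Import Order.TTheory GRing.Theory Num.Theory.
Local Open Scope classical_set_scope.
Local Open Scope ring_scope.

Lemma prodmap_cont (Y X : topologicalType) (d : nat) (f : Y -> X) :
  continuous f ->
  continuous (prodmap d f : {ptws 'I_d -> Y} -> {ptws 'I_d -> X}).
Proof.
move=> cf y.
apply/cvg_sup.
{ apply: fmap_filter; exact: nbhs_filter. }
move=> i.
have := @continuous_comp_initial ('I_d -> X) {ptws 'I_d -> Y} X (fun g => g i)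
  (prodmap d f).
apply.
move=> z; apply: continuous_comp; last exact: cf.
exact: (@proj_continuous _ (fun _ : 'I_d => Y) i).
Qed.

Lemma compact_ptws (X : topologicalType) (d : nat) :
  compact [set: X] -> compact [set: {ptws 'I_d -> X}].
Proof.
move=> cX.
have := @tychonoff _ (fun _ : 'I_d => X) (fun _ => [set: X]) (fun _ => cX).
congr compact.
by apply/seteqP; split.
Qed.

Lemma hausdorff_ptws (X : topologicalType) (d : nat) :
  hausdorff_space X -> hausdorff_space {ptws 'I_d -> X}.
Proof.
move=> hX; exact: (@hausdorff_product _ (fun _ : 'I_d => X) (fun _ => hX)).
Qed.

Lemma tpow_comm (Y X : Type) (S Sinv : Y -> Y) (T Tinv : X -> X) (f : Y -> X) :
  cancel Sinv S -> cancel T Tinv -> (forall y, f (S y) = T (f y)) ->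
  forall n y, f (tpow S Sinv n y) = tpow T Tinv n (f y).
Proof.
move=> SK TK fc.
have fi : forall y, f (Sinv y) = Tinv (f y).
  by move=> y; rewrite -{2}(SK y) fc TK.
case=> k y /=.
- by elim: k => //= k IH; rewrite fc IH.
- elim: k => /= [|k IH]; first exact: fi.
  by rewrite fi IH.
Qed.

Lemma Nd_image (Y X : topologicalType) (S Sinv : Y -> Y) (T Tinv : X -> X)
  (f : Y -> X) (d : nat) :
  compact [set: Y] -> hausdorff_space X -> cancel Sinv S -> cancel T Tinv ->
  factor_map S T f ->
  prodmap d f @` Nd S Sinv d = Nd T Tinv d.
Proof.
move=> cY hX SK TK [cf fsurj fc].
have orb : forall z p q, prodmap d f (fun i : 'I_d => tpow S Sinv (p + (i.+1)%:Z * q) z)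
   = (fun i : 'I_d => tpow T Tinv (p + (i.+1)%:Z * q) (f z)).
  by move=> z p q; apply: funext => i; rewrite /prodmap (@tpow_comm _ _ S Sinv T Tinv f SK TK fc).
have cP := @prodmap_cont _ _ d f cf.
apply/seteqP; split.
- move=> _ [y Ny <-].
  have cl : closed ((prodmap d f : {ptws 'I_d -> Y} -> {ptws 'I_d -> X}) @^-1` Nd T Tinv d).
    apply: preimage_closed; first by move=> x _; exact: cP.
    exact: closed_closure.
  suff H : Nd S Sinv d `<=` prodmap d f @^-1` Nd T Tinv d by exact: H Ny.
  rewrite {1}/Nd closureE; apply: smallest_sub cl _ => _ [z [p [q ->]]].
  rewrite /preimage /= orb; apply: subset_closure; by exists (f z), p, q.
- have cN : closed ((prodmap d f : {ptws 'I_d -> Y} -> {ptws 'I_d -> X}) @` Nd S Sinv d).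
    apply: compact_closed; first exact: hausdorff_ptws.
    apply: continuous_compact; first exact: continuous_subspaceT.
    apply: (subclosed_compact _ (@compact_ptws _ d cY)) => //.
    exact: closed_closure.
  rewrite {1}/Nd closureE; apply: smallest_sub cN _ => _ [z [p [q ->]]].
  have [z' _ <-] : (f @` setT) z by rewrite fsurj.
  exists (fun i : 'I_d => tpow S Sinv (p + (i.+1)%:Z * q) z'); last exact: orb.
  apply: subset_closure; by exists z', p, q.
Qed.

Theorem lemma5p6
  (dI : Order.disp_t) (I : orderType dI)
  (I_wf : well_founded (fun a b : I => (a < b)%O))
  (I_ne : inhabited I)
  (I_nomax : forall mu : I, exists nu : I, (mu < nu)%O)
  (X : I -> topologicalType) (T Tinv : forall mu, X mu -> X mu)
  (XL : topologicalType) (TL TLinv : XL -> XL)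
  (phi : forall mu nu : I, X nu -> X mu) (psi : forall mu : I, XL -> X mu)
  (hX : forall mu, tds (T mu) (Tinv mu) /\ minimal (T mu))
  (hXL : tds TL TLinv /\ minimal TL)
  (hphi : forall mu nu : I, (mu <= nu)%O -> factor_map (T nu) (T mu) (phi mu nu))
  (hpsi : forall mu : I, factor_map TL (T mu) (psi mu))
  (hlim : inverse_limit phi (fun mu => [set: X mu]) [set: XL] psi) :
  forall d : nat,
    inverse_limit (X := fun mu => {ptws 'I_d -> X mu})
      (fun mu nu => prodmap d (phi mu nu))
      (fun mu => Nd (T mu) (Tinv mu) d)
      (Nd TL TLinv d)
      (fun mu => prodmap d (psi mu)).
Proof.
move=> d.
case: hlim => h1 h2 h3 [h4 h5 h6].
case: hXL => [[cXL hsXL cTL cTLi [TLK TLiK]] _].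
have ND : forall mu nu, (mu <= nu)%O ->
    prodmap d (phi mu nu) @` Nd (T nu) (Tinv nu) d = Nd (T mu) (Tinv mu) d.
  move=> mu nu le; case: (hX nu) => [[cnu _ _ _ [_ Kinv]] _].
  case: (hX mu) => [[_ hmu _ _ [K _]] _].
  exact: (@Nd_image _ _ (T nu) (Tinv nu) (T mu) (Tinv mu) (phi mu nu) d cnu hmu Kinv K (hphi _ _ le)).
have NP : forall mu,
    prodmap d (psi mu) @` Nd TL TLinv d = Nd (T mu) (Tinv mu) d.
  move=> mu; case: (hX mu) => [[_ hmu _ _ [K _]] _].
  exact: (@Nd_image _ _ TL TLinv (T mu) (Tinv mu) (psi mu) d cXL hmu TLiK K (hpsi mu)).
split.
- exact: ND.
- by move=> mu x _; apply: funext => i; apply: h2.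
- by move=> mu nu rho l1 l2 x _; apply: funext => i; apply: h3.
split.
- exact: NP.
- by move=> mu nu le y _; apply: funext => i; apply: h5.
move=> x Ax cx.
pose K mu := Nd TL TLinv d `&`
  [set w : {ptws 'I_d -> XL} | prodmap d (psi mu) w = x mu].
have Kne : forall mu, K mu !=set0.
  by move=> mu; have := Ax mu; rewrite -NP => -[w Nw e]; exists w.
have Kdec : forall mu nu, (mu <= nu)%O -> K nu `<=` K mu.
  move=> mu nu le w [Nw e]; split => //=.
  rewrite /= in e; rewrite -(cx mu nu le) -e.
  by apply: funext => i; rewrite /prodmap h5.
have Kcl : forall mu, closed (K mu).
  move=> mu; apply: closedI; first exact: closed_closure.
  have -> : [set w : {ptws 'I_d -> XL} | prodmap d (psi mu) w = x mu] =
     (prodmap d (psi mu) : {ptws 'I_d -> XL} -> {ptws 'I_d -> X mu}) @^-1` [set x mu]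
     by [].
  apply: preimage_closed.
    by move=> w _; apply: prodmap_cont; case: (hpsi mu).
  apply: accessible_closed_set1; apply: hausdorff_accessible.
  by apply: hausdorff_ptws; case: (hX mu) => -[].
have FF : ProperFilter (filter_from [set: I] K).
  apply: filter_from_proper; last by move=> mu _; exact: Kne.
  apply: filter_from_filter; first by case: I_ne => mu; exists mu.
  move=> mu nu _ _; case: (leP mu nu) => le.
    by exists nu => // w Kw; split => //; exact: Kdec Kw.
  by exists mu => // w Kw; split => //; apply: Kdec Kw; exact: ltW.
have cN : compact (Nd TL TLinv d).
  apply: (subclosed_compact _ (@compact_ptws _ d cXL)) => //.
  exact: closed_closure.
have [w [Nw clw]] : Nd TL TLinv d `&` cluster (filter_from [set: I] K) !=set0.
  apply: cN; case: I_ne => mu; exists mu => //.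
  by move=> w [].
have Kw : forall mu, K mu w.
  move=> mu; have := Kcl mu; rewrite closure_id => ->.
  move=> B nB; apply: clw => //; by exists mu.
have Kwi : forall mu i, psi mu (w i) = x mu i.
  by move=> mu i; have := (Kw mu).2 => /(congr1 (fun g => g i)).
exists w; split.
  by split => // mu; exact: (Kw mu).2.
move=> w' [Nw' e']; apply: funext => i.
have Kwi' : forall mu, psi mu (w' i) = x mu i.
  by move=> mu; have := e' mu => /(congr1 (fun g => g i)).
have [y [_ uy]] := h6 (fun mu => x mu i) (fun mu => Logic.I)
  (fun mu nu le => congr1 (fun g => g i) (cx mu nu le)).
have e1 := uy (w i) (conj Logic.I (fun mu => Kwi mu i)).
have e2 := uy (w' i) (conj Logic.I Kwi').
by rewrite -e1 -e2.
Qed.
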